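(* $w^\ast(2,3)=17$. That is, every 2-coloring of $\{1,\dots,17\}$ contains a monochromatic double 3-term arithmetic progression, while the 2-coloring of $\{1,\dots,16\}$ given by the word $0010110100101101$ (the $n$-th letter being the color of $n$) contains no monochromatic double 3-term arithmetic progression.
   Context: An increasing sequence of positive integers $a_1<a_2<\cdots$ (finite or infinite) contains a double 3-term arithmetic progression if there are indices $i<j<k$ with $i+k=2j$ and $a_i+a_k=2a_j$. For a coloring of an interval, each color class is regarded as an increasing sequence by listing its elements in increasing order; a monochromatic double 3-term arithmetic progression is a double 3-term arithmetic progression in some color class. For integers $r,k$, $w^\ast(r,k)$ denotes the least integer $N$, if it exists, such that every $r$-coloring of $\{1,\dots,N\}$ has a monochromatic double $k$-term arithmetic progression (defined analogously with $k$ indices in arithmetic progression whose values are also in arithmetic progression). *)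

(* Defs.v *)
From mathcomp Require Import all_boot.
Set Implicit Arguments. Unset Strict Implicit. Unset Printing Implicit Defensive.

Definition has_double3AP (s : seq nat) : Prop :=
  exists i j k, [/\ i < j, j < k, k < size s, i + k = 2 * j &
                    nth 0 s i + nth 0 s k = 2 * nth 0 s j].

(* A 2-coloring of {1,...,N} is given by col : nat -> bool (only its values on
   1..N matter).  The color class of b, listed increasingly. *)
Definition color_class (N : nat) (col : nat -> bool) (b : bool) : seq nat :=
  [seq n <- iota 1 N | col n == b].

Definition mono_double3AP (N : nat) (col : nat -> bool) : Prop :=
  exists b : bool, has_double3AP (color_class N col b).

Definition word16 : seq bool :=
  [:: false; false; true; false; true; true; false; true;
      false; false; true; false; true; true; false; true].

Definition col16 (n : nat) : bool := nth false word16 n.-1.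

(* Main.v *)
Require Import Defs.
From mathcomp Require Import all_boot.
From mathcomp Require Import zify.

Definition hasAPb (s : seq nat) : bool :=
  has (fun i => has (fun j => [&& i < j, 2 * j - i < size s &
        nth 0 s i + nth 0 s (2 * j - i) == 2 * nth 0 s j])
     (iota 0 (size s))) (iota 0 (size s)).

Lemma hasAPbP s : has_double3AP s <-> hasAPb s.
Proof.
split.
- move=> [i [j [k [ij jk ks ik e]]]].
  apply/hasP; exists i; first by rewrite mem_iota /=; lia.
  apply/hasP; exists j; first by rewrite mem_iota /=; lia.
  have -> : 2 * j - i = k by lia.
  by rewrite ij ks e eqxx.
- move=> /hasP [i _ /hasP [j _ /and3P [ij ks /eqP e]]].
  exists i, j, (2 * j - i); split => //; lia.
Qed.

Lemma AP_cat s t : has_double3AP s -> has_double3AP (s ++ t).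
Proof.
move=> [i [j [k [ij jk ks ik e]]]].
exists i, j, k; rewrite size_cat !nth_cat.
have hi : i < size s by lia.
have hj : j < size s by lia.
rewrite hi hj ks; split => //; lia.
Qed.

Definition cls (bs : seq bool) (b : bool) : seq nat :=
  [seq p.1 | p <- zip (iota 1 (size bs)) bs & p.2 == b].

Lemma cls_eq col N b :
  color_class N col b = cls [seq col n | n <- iota 1 N] b.
Proof.
rewrite /color_class /cls size_map size_iota.
elim: N 1 => [//|N IH] m /=.
by case: (col m == b) => /=; rewrite IH.
Qed.

Lemma cls_cat p e b : exists t, cls (p ++ e) b = cls p b ++ t.
Proof.
rewrite /cls size_cat iotaD zip_cat ?size_iota // filter_cat map_cat.
by eexists.
Qed.

Definition goodc (bs : seq bool) := hasAPb (cls bs true) || hasAPb (cls bs false).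

Lemma goodc_cat p e : goodc p -> goodc (p ++ e).
Proof.
rewrite /goodc => /orP [h|h]; apply/orP; [left|right];
  [case: (cls_cat p e true) => t -> | case: (cls_cat p e false) => t ->];
  apply/hasAPbP; apply: AP_cat; exact/hasAPbP.
Qed.

Definition lastAPc (s : seq nat) : bool :=
  let k := (size s).-1 in
  has (fun j => [&& k <= 2 * j, j < k &
      nth 0 s (2 * j - k) + nth 0 s k == 2 * nth 0 s j]) (iota 0 k).

Lemma lastAPcP s : lastAPc s -> has_double3AP s.
Proof.
move=> /hasP [j _ /and3P [h1 h2 /eqP e]].
exists (2 * j - (size s).-1), j, (size s).-1; split => //; lia.
Qed.

Definition lastAP p := lastAPc (cls p true) || lastAPc (cls p false).

Lemma lastAP_good p : lastAP p -> goodc p.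
Proof.
by rewrite /lastAP /goodc => /orP [/lastAPcP/hasAPbP -> | /lastAPcP/hasAPbP ->];
  rewrite ?orbT.
Qed.

Fixpoint search (n : nat) (acc : seq bool) : bool :=
  lastAP (rev acc) ||
  (if n is n'.+1 then search n' (true :: acc) && search n' (false :: acc)
   else false).

Lemma searchP n acc : search n acc ->
  forall bs, size bs = n -> goodc (rev acc ++ bs).
Proof.
elim: n acc => [|n IH] acc /= h bs hs.
- rewrite orbF in h; apply: goodc_cat; exact: lastAP_good.
- case/orP: h => [h|/andP [h1 h2]]; first by apply: goodc_cat; exact: lastAP_good.
  case: bs hs => [//|b bs] [hs].
  have -> : rev acc ++ b :: bs = rev (b :: acc) ++ bs by rewrite rev_cons cat_rcons.
  by case: b; [apply: IH h1 _ hs | apply: IH h2 _ hs].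
Qed.

Lemma s17 : search 17 [::].
Proof. vm_compute. reflexivity. Qed.

Theorem theorem1 :
  (forall col : nat -> bool, mono_double3AP 17 col) /\
  ~ mono_double3AP 16 col16.
Proof.
split.
- move=> col.
  set bs := [seq col n | n <- iota 1 17].
  have hs : size bs = 17 by rewrite size_map size_iota.
  have := @searchP 17 [::] s17 bs hs; rewrite cat0s; rewrite /= /goodc => /orP [h|h].
  + exists true; apply/hasAPbP; by rewrite cls_eq.
  + exists false; apply/hasAPbP; by rewrite cls_eq.
- move=> [b /hasAPbP]; rewrite cls_eq.
  by case: b; vm_compute.
Qed.
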